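(* A matrix scheme $(\Theta,D)$ contains uncertainty if and only if there exist $d_1,d_2\in D$ and $\theta,\theta'\in\Theta$ such that $d_1(\theta)<d_2(\theta)$ and $d_2(\theta')<d_1(\theta')$.
   Context: A preference relation on a set $X$ is a binary relation $\prec$ on $X$ that is asymmetric ($x\prec y \Rightarrow$ not $y\prec x$) and negatively transitive (not $x\prec y$ and not $y\prec z$ $\Rightarrow$ not $x\prec z$). A matrix scheme is a pair $(\Theta,D)$ where $\Theta$ is an arbitrary nonempty set and $D$ is a set of real-valued functions on $\Theta$. Domination on $D$ is the relation $\prec$ defined by: $d_1\prec d_2$ iff $d_1(\theta)\le d_2(\theta)$ for all $\theta\in\Theta$ and $d_1(\theta^* )<d_2(\theta^* )$ for some $\theta^*\in\Theta$. A projection of preference of consequences in $(\Theta,D)$ is a preference relation $\prec^P$ on $D$ such that $d_1\prec d_2\Rightarrow d_1\prec^P d_2$ for all $d_1,d_2\in D$. The matrix scheme $(\Theta,D)$ contains uncertainty if the projection of preference of consequences in $(\Theta,D)$ is not unique (i.e. there are at least two distinct projections). *)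

(* Defs.v *)
From Stdlib Require Import Reals.
Open Scope R_scope.

(* A matrix scheme (Theta, D): Theta a nonempty type, D a set of real-valued
   functions on Theta, given as a predicate.  Elements of D are the subtype
   {d | D d}. *)
Definition elemD {Theta : Type} (D : (Theta -> R) -> Prop) : Type := {d : Theta -> R | D d}.

Definition preference_relation {X : Type} (r : X -> X -> Prop) : Prop :=
  (forall x y, r x y -> ~ r y x) /\
  (forall x y z, ~ r x y -> ~ r y z -> ~ r x z).

Definition dominated {Theta : Type} (d1 d2 : Theta -> R) : Prop :=
  (forall t, d1 t <= d2 t) /\ (exists t, d1 t < d2 t).

Definition projection {Theta : Type} (D : (Theta -> R) -> Prop)
  (P : elemD D -> elemD D -> Prop) : Prop :=
  preference_relation P /\
  (forall d1 d2 : elemD D, dominated (proj1_sig d1) (proj1_sig d2) -> P d1 d2).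

Definition contains_uncertainty {Theta : Type} (D : (Theta -> R) -> Prop) : Prop :=
  exists P1 P2 : elemD D -> elemD D -> Prop,
    projection D P1 /\ projection D P2 /\ ~ (forall x y, P1 x y <-> P2 x y).

(* Main.v *)
Require Import Defs.
From Stdlib Require Import Reals.
Open Scope R_scope.
From Stdlib Require Import Lra Classical FunctionalExtensionality ProofIrrelevance.
From mathcomp Require Import ssreflect ssrfun ssrbool eqtype boolp wochoice.
Open Scope R_scope.

Lemma wo_prop (T : Type) : exists W : T -> T -> Prop,
  (forall A : T -> Prop, (exists x, A x) -> exists z, A z /\ forall x, A x -> W z x) /\
  (forall x y, W x y -> W y x -> x = y).
Proof.
have [R HR] := @well_ordering_principle {classic T}.
exists (fun x y => R x y); split.
  move=> A [x Ax].
  have [|z [[Az lb] _]] := HR (fun x => `[< A x >]).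
    by exists x; rewrite unfold_in; apply/asboolP.
  exists z; split; first by move: Az; rewrite unfold_in => /asboolP.
  by move=> y Ay; apply: lb; rewrite unfold_in; apply/asboolP.
move=> x y Rxy Ryx.
have := @wo_chain_antisymmetric _ R predT.
move=> /(_ _ x y isT isT); apply; last by rewrite Rxy Ryx.
by move=> A _; apply: HR.
Qed.

Section Lex.
Variable Theta : Type.
Variable W : Theta -> Theta -> Prop.
Hypothesis Wmin : forall A : Theta -> Prop, (exists x, A x) -> exists z, A z /\ forall x, A x -> W z x.
Hypothesis Wanti : forall x y, W x y -> W y x -> x = y.

Lemma Wtot x y : W x y \/ W y x.
Proof.
destruct (Wmin (fun z => z = x \/ z = y)) as [z [Hz H]]; [eauto|].
destruct Hz; subst; eauto.
Qed.

Lemma Wtrans x y z : W x y -> W y z -> W x z.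
Proof.
intros Hxy Hyz.
destruct (Wmin (fun w => w = x \/ w = y \/ w = z)) as [m [Hm H]]; [eauto|].
destruct Hm as [Hm|[Hm|Hm]]; subst m; eauto.
- have E : x = y by apply: Wanti; auto. by subst.
- have E : y = z by apply: Wanti; auto. by subst.
Qed.

Definition lex (f g : Theta -> R) :=
  exists t, f t < g t /\ forall s, f s <> g s -> W t s.

Lemma lex_asym f g : lex f g -> ~ lex g f.
Proof.
intros [t1 [H1 M1]] [t2 [H2 M2]].
have E : t1 = t2 by apply: Wanti; [apply: M1 | apply: M2]; lra.
subst; lra.
Qed.

Lemma lex_trans f g h : lex f g -> lex g h -> lex f h.
Proof.
intros [t1 [H1 M1]] [t2 [H2 M2]].
destruct (Wtot t1 t2) as [W12|W21].
- exists t1; split.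
  + destruct (Req_dec (g t1) (h t1)) as [E|E]; [lra|].
    have E' : t1 = t2 by apply: Wanti; auto.
    subst; lra.
  + intros s Hs. destruct (Req_dec (f s) (g s)) as [E|E]; auto.
    apply: Wtrans; [exact W12| apply: M2; congruence].
- exists t2; split.
  + destruct (Req_dec (f t2) (g t2)) as [E|E]; [lra|].
    have E' : t1 = t2 by apply: Wanti; auto.
    subst; lra.
  + intros s Hs. destruct (Req_dec (g s) (h s)) as [E|E]; auto.
    apply: Wtrans; [exact W21| apply: M1; congruence].
Qed.

Lemma lex_tri f g : (exists s, f s <> g s) -> lex f g \/ lex g f.
Proof.
intros Hs. destruct (Wmin _ Hs) as [t [Ht M]].
destruct (Rtotal_order (f t) (g t)) as [L|[L|L]].
- left; exists t; split; auto.
- tauto.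
- right; exists t; split; [exact L| intros s Hs0; apply: M; auto].
Qed.

Lemma lex_dom f g : dominated f g -> lex f g.
Proof.
intros [Hle [s Hs]].
have Ex : exists s, f s <> g s by exists s; lra.
destruct (Wmin _ Ex) as [t [Ht M]].
exists t; split; auto. have := Hle t; lra.
Qed.

Definition lexs (p : Theta) (f g : Theta -> R) :=
  f p < g p \/ (f p = g p /\ lex f g).

Lemma lexs_asym p f g : lexs p f g -> ~ lexs p g f.
Proof.
intros [H|[E H]] [H'|[E' H']]; try lra.
all: eapply lex_asym; eassumption.
Qed.

Lemma lexs_trans p f g h : lexs p f g -> lexs p g h -> lexs p f h.
Proof.
intros [H|[E H]] [H'|[E' H']]; try (left; lra).
right; split; [lra| eapply lex_trans; eassumption].
Qed.

Lemma lexs_tri p f g : (exists s, f s <> g s) -> lexs p f g \/ lexs p g f.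
Proof.
intros Hs. destruct (Rtotal_order (f p) (g p)) as [L|[L|L]].
- by left; left.
- destruct (lex_tri _ _ Hs); [left|right]; right; split; auto.
- by right; left.
Qed.

Lemma lexs_dom p f g : dominated f g -> lexs p f g.
Proof.
intros Hd. have := lex_dom _ _ Hd. destruct Hd as [Hle _].
have := Hle p. intros Hp Hl.
destruct (Rle_lt_or_eq_dec _ _ Hp); [left|right]; auto.
Qed.

Lemma lexs_proj p (D : (Theta -> R) -> Prop) :
  projection D (fun x y : elemD D => lexs p (proj1_sig x) (proj1_sig y)).
Proof.
split; [split|].
- intros x y; apply: lexs_asym.
- intros x y z Nxy Nyz Hxz.
  destruct (Classical_Prop.classic (exists s, proj1_sig x s <> proj1_sig y s)) as [Ex|NEx].
  + destruct (lexs_tri p _ _ Ex) as [H|H]; [tauto|].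
    exact: (Nyz (lexs_trans _ _ _ _ H Hxz)).
  + have E : proj1_sig x = proj1_sig y.
      apply: functional_extensionality => s.
      apply: NNPP => Hs; apply: NEx; by exists s.
    rewrite E in Hxz; tauto.
- intros x y; apply: lexs_dom.
Qed.
End Lex.

Theorem mainTheorem5 (Theta : Type) (HTheta : inhabited Theta)
  (D : (Theta -> R) -> Prop) :
  contains_uncertainty D <->
  exists d1 d2 : Theta -> R, D d1 /\ D d2 /\
    exists t t' : Theta, d1 t < d2 t /\ d2 t' < d1 t'.
Proof.
split.
- intros [P1 [P2 [HP1 [HP2 Hne]]]].
  apply: NNPP => Hno.
  have key : forall P, projection D P -> forall x y, P x y <-> dominated (proj1_sig x) (proj1_sig y).
    intros P [[Pas Pnt] Pdom] x y; split; last by apply: Pdom.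
    intros Pxy.
    destruct (Classical_Prop.classic (exists t, proj1_sig y t < proj1_sig x t)) as [[t Ht]|Nt].
    + exfalso. apply: (Pas x y Pxy). apply: Pdom. split.
      * intros s. apply: Rnot_lt_le => Hs. apply: Hno.
        exists (proj1_sig x), (proj1_sig y); split; [exact: proj2_sig|split; [exact: proj2_sig|]].
        by exists s, t.
      * by exists t.
    + have Hle : forall s, proj1_sig x s <= proj1_sig y s.
        intros s; apply: Rnot_lt_le => Hs; apply: Nt; by exists s.
      destruct (Classical_Prop.classic (exists t, proj1_sig x t < proj1_sig y t)) as [Ex|Nx].
      * by split.
      * exfalso.
        have E : proj1_sig x = proj1_sig y.
          apply: functional_extensionality => s.
          have := Hle s. intros. destruct (Rle_lt_or_eq_dec _ _ H); auto.
          exfalso; apply: Nx; by exists s.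
        destruct x as [fx px], y as [fy py]; simpl in E; subst fy.
        have Ep : px = py by apply: proof_irrelevance.
        subst py. exact: (Pas _ _ Pxy Pxy).
  apply: Hne => x y. rewrite (key _ HP1) (key _ HP2). tauto.
- intros [d1 [d2 [D1 [D2 [t [t' [Ht Ht']]]]]]].
  destruct (wo_prop Theta) as [W [Wmin Wanti]].
  exists (fun x y : elemD D => lexs Theta W t (proj1_sig x) (proj1_sig y)).
  exists (fun x y : elemD D => lexs Theta W t' (proj1_sig x) (proj1_sig y)).
  split; [exact: (lexs_proj Theta W Wmin Wanti t D)|split; [exact: (lexs_proj Theta W Wmin Wanti t' D)|]].
  intros Heq.
  pose x : elemD D := exist _ d1 D1. pose y : elemD D := exist _ d2 D2.
  have H1 : lexs Theta W t d1 d2 by left.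
  have H2 : lexs Theta W t' d2 d1 by left.
  have := proj1 (Heq x y) H1. simpl. eapply lexs_asym; [exact Wanti|exact H2].
Qed.
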